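(* Let $\varphi:V\to V$ be an $R$-linear map, where $R=\mathbb{R}[t^{\pm1}]$ and $V$ is a free $R$-module of rank $n-1$. Suppose that the $\mathbb{E}$-linear map $\varphi\otimes_R\mathrm{Id}:V\otimes_R\mathbb{E}\to V\otimes_R\mathbb{E}$ has all of its eigenvalues $(\lambda_1,\dots,\lambda_{n-1})$ in $\mathbb{E}$. Then for every $m\geq1$, every eigenvalue of the $\mathbb{F}_m$-linear map $\varphi^{\otimes_{\mathbb{R}}m}\otimes_{R_m}\mathrm{Id}:V_m\otimes_{R_m}\mathbb{F}_m\to V_m\otimes_{R_m}\mathbb{F}_m$ is of the form $\lambda_{i_1}\otimes\cdots\otimes\lambda_{i_m}$ with $1\leq i_1,\dots,i_m\leq n-1$.
   Context: $\mathbb{E}=\bigcup_{k\ge1}\mathbb{R}((t^{1/k}))$ is the field of Puiseux series over $\mathbb{R}$, containing $R$. $R_m=R^{\otimes_{\mathbb{R}}m}$, $\mathbb{E}_m=\mathbb{E}^{\otimes_{\mathbb{R}}m}\supset R_m$, which is an integral domain with field of fractions $\mathbb{F}_m$; $V_m=V^{\otimes_{\mathbb{R}}m}$ is an $R_m$-module via $(r_1\otimes\cdots\otimes r_m)(u_1\otimes\cdots\otimes u_m)=r_1u_1\otimes\cdots\otimes r_mu_m$, and $\varphi^{\otimes_{\mathbb{R}}m}(u_1\otimes\cdots\otimes u_m)=\varphi(u_1)\otimes\cdots\otimes\varphi(u_m)$. Elements $\lambda_{i_1}\otimes\cdots\otimes\lambda_{i_m}\in\mathbb{E}_m$ are regarded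 in $\mathbb{F}_m$. *)

(* Defs.v *)
From HB Require Import structures.
From mathcomp Require Import all_boot all_order all_algebra.
From mathcomp Require Import mxtens.
From mathcomp Require Import reals.
Set Implicit Arguments. Unset Strict Implicit. Unset Printing Implicit Defensive.
Import Order.TTheory GRing.Theory Num.Theory.
Local Open Scope ring_scope.

(* [laurent_in c t x]: x lies in the image of R = K[t, t^-1] inside E,
   where c : K -> E is the structure map of the K-algebra E and t \in E
   is the (invertible) variable: x = p(t) * t^-k for some p in K[X], k. *)
Definition laurent_in (K : realType) (E : fieldType) (c : {rmorphism K -> E})
  (t : E) (x : E) : Prop :=
  exists (p : {poly K}) (k : nat), x = (map_poly c p).[t] * t ^- k.

Fixpoint tens_pow (F : comRingType) (d : nat) (B : nat -> 'M[F]_d) (k : nat)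
  : 'M[F]_(d ^ k) :=
  match k return 'M[F]_(d ^ k) with
  | 0 => 1%:M
  | k'.+1 => castmx (esym (expnSr d k'), esym (expnSr d k'))
                    (tens_pow B k' *t B k')
  end.

(* Main.v *)
Require Import Defs.
From HB Require Import structures.
From mathcomp Require Import all_boot all_order all_algebra.
From mathcomp Require Import mxtens.
From mathcomp Require Import reals.
Import Order.TTheory GRing.Theory Num.Theory.
Local Open Scope ring_scope.

Section CoreS.
Set Implicit Arguments. Unset Strict Implicit.

Variable F : fieldType.

Lemma eigenvalue_cast p q (e : p = q) (M : 'M[F]_p) x :
  eigenvalue (castmx (e, e) M) x = eigenvalue M x.
Proof. by case: q / e in M *; rewrite castmx_id. Qed.

Lemma sum_tens a b (G : 'I_(a * b) -> F) :
  \sum_k G k = \sum_i \sum_j G (mxtens_index (i, j)).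
Proof.
rewrite pair_big /= (reindex (@mxtens_index a b)) /=; first by apply: eq_bigr => -[].
by exists (@mxtens_unindex a b) => k _; rewrite (mxtens_indexK, mxtens_unindexK).
Qed.

Lemma tens_scal a b (x : F) : (1%:M : 'M_a) *t (x%:M : 'M_b) = x%:M.
Proof.
apply/matrixP => i j.
case: (@mxtens_indexP a b i) => i1 i2; case: (@mxtens_indexP a b j) => j1 j2.
rewrite tensmxE !mxE (inj_eq (can_inj (@mxtens_indexK a b))) xpair_eqE.
by case: (i1 == j1); case: (i2 == j2); rewrite ?mulr1n ?mulr0n ?mul1r ?mul0r.
Qed.

Lemma tensBr a b (M : 'M[F]_a) (P Q : 'M[F]_b) : M *t (P - Q) = M *t P - M *t Q.
Proof. by apply/matrixP => i j; rewrite !mxE mulrBr. Qed.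

Lemma step1 a d (C : 'M[F]_a) (D : 'M[F]_d.+1) (l : 'I_d.+1 -> F) mu
  (s : seq 'I_d.+1) (X : 'rV[F]_(a * d.+1)) :
  X != 0 -> X *m (C *t D) = mu *: X ->
  X *m ((1%:M : 'M_a) *t \prod_(i <- s) (D - (l i)%:M)) = 0 ->
  exists i, exists2 Y : 'rV_(a * d.+1), Y != 0 &
    Y *m (C *t D) = mu *: Y /\ Y *m ((1%:M : 'M_a) *t D) = l i *: Y.
Proof.
elim: s X => [|i s IH] X X0 XE.
  have -> : (\prod_(i <- [::]) (D - (l i)%:M)) = (1 : F)%:M by rewrite big_nil.
  rewrite tens_scal mulmx1 => X00; by rewrite X00 eqxx in X0.
rewrite big_cons.
have -> : forall P : 'M_d.+1, (1%:M : 'M_a) *t ((D - (l i)%:M) * P) =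
   (1%:M *t (D - (l i)%:M)) *m (1%:M *t P).
  by move=> P; rewrite tensmx_mul mulmx1 mulmxE.
rewrite mulmxA.
have [Z|NZ] := eqVneq (X *m (1%:M *t (D - (l i)%:M))) 0.
  move=> _; exists i, X => //; split => //.
  move/eqP: Z; rewrite tensBr mulmxBr tens_scal mul_mx_scalar subr_eq0.
  by move/eqP.
move=> H; apply: (IH _ NZ) => //.
rewrite -mulmxA tensmx_mul mul1mx.
have -> : C *t ((D - (l i)%:M) *m D) = (C *t D) *m (1%:M *t (D - (l i)%:M)).
  by rewrite tensmx_mul mulmx1 mulmxBl mulmxBr scalar_mxC.
by rewrite mulmxA XE -scalemxAl.
Qed.

Lemma step3 a b (C : 'M[F]_a) (Y : 'rV[F]_(a * b)) nu :
  Y != 0 -> Y *m (C *t (1%:M : 'M_b)) = nu *: Y -> eigenvalue C nu.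
Proof.
move=> Y0 YE.
have [k Yk] : exists k, Y 0 k != 0.
  apply/existsP; apply: contraNT Y0; rewrite negb_exists => /forallP H.
  by apply/eqP/rowP => k; rewrite mxE; apply/eqP; move: (H k); rewrite negbK.
case: (mxtens_indexP k) Yk => i0 j0 Yk.
apply/eigenvalueP; exists (\row_i Y 0 (mxtens_index (i, j0))); last first.
  by apply/negP => /eqP/rowP/(_ i0); rewrite !mxE; apply/eqP.
apply/rowP => j; rewrite !mxE.
move/rowP: YE => /(_ (mxtens_index (j, j0))); rewrite !mxE => <-.
rewrite sum_tens; apply: eq_bigr => i _.
rewrite (bigD1 j0) //= big1 ?addr0; last first.
  by move=> l /negbTE lj; rewrite tensmxE mxE lj mulr0n mulr0 mulr0.
by rewrite tensmxE mxE !mxE eqxx mulr1n mulr1.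
Qed.

Lemma core_pos d (B : nat -> 'M[F]_d.+1) (lam : nat -> 'I_d.+1 -> F)
  (hB : forall k, char_poly (B k) = \prod_(i < d.+1) ('X - (lam k i)%:P)) m mu :
  eigenvalue (tens_pow B m) mu ->
  exists idx : 'I_m -> 'I_d.+1, mu = \prod_(k < m) lam k (idx k).
Proof.
elim: m mu => [|m IH] mu.
  move/eigenvalueP => [v]; rewrite /= mulmx1 => vE v0.
  exists (fun k => ord0); rewrite big_ord0.
  apply/eqP; rewrite eq_sym -subr_eq0; apply/eqP.
  have : (1 - mu) *: v = 0 by rewrite scalerBl scale1r {1}vE subrr.
  by move/eqP; rewrite scaler_eq0 (negbTE v0) orbF => /eqP.
rewrite /= eigenvalue_cast => /eigenvalueP [v vE v0].
set C := tens_pow B m in vE.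
have CH : v *m ((1%:M : 'M_(d.+1 ^ m)) *t \prod_(i < d.+1) (B m - (lam m i)%:M)) = 0.
  have -> : \prod_(i < d.+1) (B m - (lam m i)%:M) = 0.
    rewrite -(Cayley_Hamilton (B m)) hB rmorph_prod; apply: eq_bigr => i _.
    by rewrite rmorphB /= horner_mx_X horner_mx_C.
  by rewrite tensmx0 mulmx0.
have [i [Y Y0 [YE YD]]] := step1 v0 vE CH.
have [x0|xn0] := eqVneq (lam m i) 0.
  have mu0 : mu = 0.
    move: YE; rewrite tensmx_decl mulmxA YD x0 scale0r mul0mx => /eqP.
    by rewrite eq_sym scaler_eq0 (negbTE Y0) orbF => /eqP.
  exists (fun k : 'I_m.+1 => if unlift ord_max k is Some k' then ord0 else i).
  by rewrite big_ord_recr /= unlift_none x0 mulr0.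
have : eigenvalue C (mu / lam m i).
  apply: (step3 Y0).
  apply: (scalerI xn0); rewrite scalerA mulrC divfK // -YE (tensmx_decl C (B m)) mulmxA YD.
  by rewrite -scalemxAl.
move/IH => [idx hidx].
exists (fun k : 'I_m.+1 => if unlift ord_max k is Some k' then idx k' else i).
rewrite big_ord_recr /= unlift_none -(divfK xn0 mu) hidx; congr (_ * _).
apply: eq_bigr => k _.
have -> : widen_ord (leqnSn m) k = lift ord_max k by by apply: val_inj; rewrite /= /bump leqNgt ltn_ord.
by rewrite liftK.
Qed.

Lemma core d (B : nat -> 'M[F]_d) (lam : nat -> 'I_d -> F)
  (hB : forall k, char_poly (B k) = \prod_(i < d) ('X - (lam k i)%:P)) m mu :
  (0 < m)%N -> eigenvalue (tens_pow B m) mu ->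
  exists idx : 'I_m -> 'I_d, mu = \prod_(k < m) lam k (idx k).
Proof.
case: d B lam hB => [|d] B lam hB m0; last exact: core_pos.
move/eigenvalueP => [v _ v0]; exfalso; move/negP: v0; apply.
by apply/eqP/rowP => k; by have := leq_trans (ltn_ord k) (eq_leq (exp0n m0)).
Qed.


End CoreS.
Unset Implicit Arguments. Set Strict Implicit.

Theorem mainTheorem11
  (K : realType)                       (* the reals *)
  (E : fieldType) (c : {rmorphism K -> E}) (t : E) (t_neq0 : t != 0)
  (n : nat)
  (A : 'M[E]_(n.-1))                   (* matrix of phi (x) Id over E *)
  (A_in_R : forall i j, laurent_in c t (A i j))   (* phi is R-linear *)
  (lambda : 'I_(n.-1) -> E)
  (hsplit : char_poly A = \prod_(i < n.-1) ('X - (lambda i)%:P))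
  (m : nat) (m_gt0 : (0 < m)%N)
  (F : fieldType)                      (* F_m *)
  (iota : nat -> {rmorphism E -> F})   (* iota k : E -> F_m, k-th tensor factor *)
  (hiota_c : forall k1 k2 (r : K), iota k1 (c r) = iota k2 (c r)) :
  forall mu : F,
    eigenvalue (tens_pow (fun k => map_mx (iota k) A) m) mu ->
    exists idx : 'I_m -> 'I_(n.-1),
      mu = \prod_(k < m) iota k (lambda (idx k)).
Proof.
move=> mu hmu.
have hB : forall k, char_poly (map_mx (iota k) A) = \prod_(i < n.-1) ('X - (iota k (lambda i))%:P).
  move=> k; rewrite -map_char_poly hsplit rmorph_prod; apply: eq_bigr => i _.
  by rewrite /= map_polyXsubC.
exact: (core hB m_gt0 hmu).
Qed.
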